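(* Let $A\in\mathbb{R}^{n\times n}$ be nonsingular with $A\geq 0$ and $A^{-1}\geq 0$, and let $(U_k^{(i)},V_k^{(i)},E_k)_{k=1}^{p}$, $i=1,2$, be two weak regular multisplittings of $A$ (with the same weighting matrices $E_k$). If $V_k^{(2)}\geq V_k^{(1)}$ for each $k=1,\ldots,p$, then $\rho(H_1)\leq\rho(H_2)<1$, where $H_i=\sum_{k=1}^{p}E_k[U_k^{(i)}]^{-1}V_k^{(i)}$ for $i=1,2$.
   Context: Inequalities are entrywise; $\rho(\cdot)$ is the spectral radius. A splitting $A=U-V$ of $A\in\mathbb{R}^{n\times n}$ is weak regular if $U$ is nonsingular, $U^{-1}\geq 0$ and $U^{-1}V\geq 0$. A weak regular multisplitting of $A$ is a triplet $(U_k,V_k,E_k)_{k=1}^{p}$ where each $A=U_k-V_k$ is a weak regular splitting and each $E_k\geq 0$ is an $n\times n$ diagonal matrix with $\sum_{k=1}^{p}E_k=I$. *)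

(* Defs.v *)
(* real matrices over an arbitrary real closed field R
   (e.g. the reals); eigenvalues live in the algebraic closure R[i]. *)
From HB Require Import structures.
From mathcomp Require Import all_boot all_order all_algebra.
From mathcomp Require Import complex.
Set Implicit Arguments. Unset Strict Implicit. Unset Printing Implicit Defensive.
Import Order.TTheory GRing.Theory Num.Theory.
Local Open Scope ring_scope.

Definition nonneg_mx (R : numDomainType) m n (A : 'M[R]_(m, n)) : Prop :=
  forall i j, 0 <= A i j.

Definition le_mx (R : numDomainType) m n (A B : 'M[R]_(m, n)) : Prop :=
  forall i j, A i j <= B i j.

Definition cplx_mx (R : rcfType) n (A : 'M[R]_n) : 'M[R[i]]_n :=
  map_mx (fun x => (x%:C)%C) A.

(* the eigenvalues (with algebraic multiplicity) of A in R[i]: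
   the roots of the characteristic polynomial *)
Definition spectrum (R : rcfType) n (A : 'M[R]_n) : seq R[i] :=
  sval (closed_field_poly_normal (char_poly (cplx_mx A))).

(* spectral radius: max modulus of the eigenvalues (0 if n = 0) *)
Definition spectral_radius (R : rcfType) n (A : 'M[R]_n) : R :=
  \big[Num.max/0]_(z <- spectrum A) Normc.normc z.

Definition weak_regular_splitting (R : numFieldType) n (A U V : 'M[R]_n) : Prop :=
  [/\ A = U - V, U \in unitmx, nonneg_mx (invmx U) & nonneg_mx (invmx U *m V)].

Definition weak_regular_multisplitting (R : numFieldType) n p
  (A : 'M[R]_n) (U V E : 'I_p -> 'M[R]_n) : Prop :=
  [/\ forall k, weak_regular_splitting A (U k) (V k),
      forall k, is_diag_mx (E k) /\ nonneg_mx (E k)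
    & \sum_(k < p) E k = 1%:M].

Definition multisplitting_iter (R : numFieldType) n p
  (U V E : 'I_p -> 'M[R]_n) : 'M[R]_n :=
  \sum_(k < p) E k *m (invmx (U k) *m V k).

(* Main.v *)
Require Import Defs.
From HB Require Import structures.
From mathcomp Require Import all_boot all_order all_algebra.
From mathcomp Require Import complex polyrcf ring lra.
Import Order.TTheory GRing.Theory Num.Theory.
Local Open Scope ring_scope.
Set Implicit Arguments. Unset Strict Implicit. Unset Printing Implicit Defensive.

Lemma nn_mul (R : numDomainType) m n k (A : 'M[R]_(m,n)) (B : 'M[R]_(n,k)) :
  nonneg_mx A -> nonneg_mx B -> nonneg_mx (A *m B).
Proof. by move=> hA hB i j; rewrite mxE sumr_ge0 // => l _; rewrite mulr_ge0. Qed.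

Lemma nn_add (R : numDomainType) m n (A B : 'M[R]_(m,n)) :
  nonneg_mx A -> nonneg_mx B -> nonneg_mx (A + B).
Proof. by move=> hA hB i j; rewrite mxE addr_ge0. Qed.

Lemma nn_sum (R : numDomainType) m n p (F : 'I_p -> 'M[R]_(m,n)) :
  (forall k, nonneg_mx (F k)) -> nonneg_mx (\sum_(k < p) F k).
Proof. by move=> h i j; rewrite summxE sumr_ge0 // => k _; apply: h. Qed.

Lemma nn_scale (R : numDomainType) m n a (A : 'M[R]_(m,n)) :
  0 <= a -> nonneg_mx A -> nonneg_mx (a *: A).
Proof. by move=> ha h i j; rewrite mxE mulr_ge0. Qed.



Definition mono (R : numDomainType) n (Q : 'M[R]_n) :=
  forall x : 'rV[R]_n, nonneg_mx (x *m Q) -> nonneg_mx x.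

Lemma mono_zero (R : numDomainType) n (Q : 'M[R]_n) (v : 'rV_n) :
  mono Q -> v *m Q = 0 -> v = 0.
Proof.
move=> hQ vQ.
have h1 : nonneg_mx v by apply: hQ; rewrite vQ => ? ?; rewrite mxE.
have h2 : nonneg_mx (-v) by apply: hQ; rewrite mulNmx vQ oppr0 => ? ?; rewrite mxE.
apply/matrixP => i j; rewrite mxE; apply/eqP; rewrite eq_le h1 andbT.
by have := h2 i j; rewrite mxE oppr_ge0.
Qed.

Lemma mono_unit (R : numFieldType) n (Q : 'M[R]_n) : mono Q -> Q \in unitmx.
Proof.
move=> hQ; rewrite unitmxE unitfE; apply/negP => /det0P [v vn0 vQ].
by rewrite (mono_zero hQ vQ) eqxx in vn0.
Qed.

Lemma mono_inv (R : numFieldType) n (Q : 'M[R]_n) : mono Q -> nonneg_mx (invmx Q).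
Proof.
move=> hQ i j; have := hQ (row i (invmx Q)); rewrite -row_mul mulVmx ?mono_unit //.
move=> /(_ _) h; have := h _ 0 j; rewrite mxE; apply.
by move=> a b; rewrite !mxE ler0n.
Qed.

Lemma det_schur (R : fieldType) n (X : 'M[R]_(1+n)) :
  drsubmx X \in unitmx ->
  \det X = \det (drsubmx X) *
     (ulsubmx X - ursubmx X *m invmx (drsubmx X) *m dlsubmx X) 0 0.
Proof.
move=> hd; rewrite -{1}[X]submxK.
set a := ulsubmx X; set b := ursubmx X; set c := dlsubmx X; set d := drsubmx X.
have -> : block_mx a b c d = block_mx 1%:M (b *m invmx d) 0 1%:M *m
   block_mx (a - b *m invmx d *m c) 0 c d.
  rewrite mulmx_block !mul1mx !mul0mx ?mulmx0 !add0r ?addr0.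
  by rewrite mulmxKV // subrK.
by rewrite (@det_mulmx _ (1+n)) det_ublock det_lblock !det1 !mul1r det_mx11 mulrC.
Qed.

Lemma sIC_block (R : comNzRingType) n (C : 'M[R]_(1+n)) s :
  (s%:M - C : 'M_(1+n)) = block_mx (s%:M - ulsubmx C) (- ursubmx C)
        (- dlsubmx C) (s%:M - drsubmx C).
Proof.
by rewrite -{1}[C]submxK (scalar_mx_block 1 n s) opp_block_mx add_block_mx !sub0r.
Qed.

Lemma horner_char (R : comNzRingType) n (A : 'M[R]_n) s :
  (char_poly A).[s] = \det (s%:M - A).
Proof.
symmetry; rewrite horner_sum; apply: eq_bigr => x _.
rewrite hornerM horner_exp !hornerE; congr (_ * _).
rewrite (big_morph _ (fun p q => hornerM p q s) (hornerC 1 s)).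
by apply: eq_bigr => i _; rewrite !mxE !(hornerE, hornerMn).
Qed.

Lemma F1 (R : fieldType) n (C : 'M[R]_(1+n)) s :
  (s%:M - drsubmx C) \in unitmx ->
  (char_poly C).[s] = (char_poly (drsubmx C)).[s] *
    (s - ulsubmx C 0 0 - (ursubmx C *m invmx (s%:M - drsubmx C) *m dlsubmx C) 0 0).
Proof.
move=> hu; rewrite !horner_char sIC_block det_schur; rewrite ?block_mxKdr //.
rewrite block_mxKul block_mxKur block_mxKdl mulNmx mulmxN opprK.
rewrite !mxE eqxx mulr1n; congr (_ * (_ + _)); rewrite -sumrN.
by apply: eq_bigr => j _; rewrite mxE mulNr.
Qed.

Lemma monic_pos (R : rcfType) (p : {poly R}) t :
  p \is monic -> (forall s, t <= s -> p.[s] != 0) -> forall s, t <= s -> 0 < p.[s].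
Proof.
move=> pm hp s ts.
have := @sgp_pinftyP R t p.
rewrite /sgp_pinfty (eqP pm) sgr1 => /(_ _ s) h.
rewrite -sgr_cp0 h //; last by rewrite in_itv /= ts.
by move=> y; rewrite in_itv /= andbT => /hp; rewrite /root.
Qed.

Lemma poly_right_ge0 (R : rcfType) (q : {poly R}) s0 :
  (forall s, s0 < s -> 0 <= q.[s]) -> 0 <= q.[s0].
Proof.
move=> h; rewrite leNgt; apply/negP => hq.
have hq0 : 0 < - q.[s0] by rewrite oppr_gt0.
have [d d0 hd] := @poly_cont R s0 q (- q.[s0]) hq0.
have := hd (s0 + d / 2%:R).
rewrite addrAC subrr add0r ger0_norm ?divr_ge0 ?ltW // ltr_pdivrMr ?ltr0n //.
rewrite ltr_pMr // ?ltr1n // => /(_ isT) /ltr_normlW.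
rewrite ltrBlDr addNr => hneg.
have := h (s0 + d / 2%:R); rewrite ltrDl divr_gt0 ?ltr0n // => /(_ isT).
by rewrite leNgt hneg.
Qed.

Lemma L2_step (R : rcfType) n (C : 'M[R]_(1+n)) t
  (IH : forall (D : 'M[R]_n) t, nonneg_mx D ->
     (forall s, t <= s -> (char_poly D).[s] != 0) -> mono (t%:M - D)) :
  nonneg_mx C -> (forall s, t <= s -> (char_poly C).[s] != 0) ->
  mono (t%:M - C).
Proof.
move=> hC hroot.
set a := ulsubmx C; set b := ursubmx C; set c := dlsubmx C; set D := drsubmx C.
have ha : nonneg_mx a by move=> i j; rewrite !mxE.
have hb : nonneg_mx b by move=> i j; rewrite !mxE.
have hc : nonneg_mx c by move=> i j; rewrite !mxE.
have hD : nonneg_mx D by move=> i j; rewrite !mxE.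
have pCpos := monic_pos (char_poly_monic C) hroot.
have HD : forall s, t <= s -> (char_poly D).[s] != 0.
  set pD := char_poly D.
  move=> s1 ts1; apply/negP => /eqP r1.
  have pD0 : pD != 0 by apply: monic_neq0; exact: char_poly_monic.
  have s1B : s1 < cauchy_bound pD.
    have hr : root pD s1 by rewrite /root r1.
    by have := root_in_cauchy_bound pD0 hr; rewrite in_itv /= => /andP[_ ->].
  case: (prev_rootP pD (t - 1) (cauchy_bound pD)).
  - by move=> /eqP; rewrite (negPf pD0).
  - move=> s0 _ ps0 s0in hno.
    have s1s0 : s1 <= s0.
      rewrite leNgt; apply/negP => h; have := hno s1.
      by rewrite in_itv /= h s1B /root r1 eqxx => /(_ isT).
    have ts0 : t <= s0 := le_trans ts1 s1s0.
    have Hs : forall s, s0 < s -> mono (s%:M - D) /\ 0 < pD.[s].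
      move=> s hs.
      have nr : forall r, s <= r -> pD.[r] != 0.
        move=> r sr; case: (ltP r (cauchy_bound pD)) => rB.
          have := hno r; rewrite in_itv /= rB andbT (lt_le_trans hs sr).
          by rewrite /root => /(_ isT).
        have := @ge_cauchy_bound R pD pD0 r; rewrite in_itv /= rB /root.
        by move=> /(_ isT).
      by split; [exact: IH | exact: (monic_pos (char_poly_monic D) nr (lexx s))].
    pose Pp := ('X - (a 0 0)%:P) * pD - char_poly C.
    have : 0 <= Pp.[s0].
      apply: poly_right_ge0 => s hs; have [m pp] := Hs s hs.
      rewrite /Pp !hornerE (F1 (mono_unit m)) -/D -/a -/b -/c.
      set k := (b *m _ *m c) 0 0.
      have hk : 0 <= k by apply: nn_mul; [apply: nn_mul => //; apply: mono_inv|].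
      have -> : (s - a 0 0) * pD.[s] - pD.[s] * (s - a 0 0 - k) = pD.[s] * k by ring.
      by rewrite mulr_ge0 // ltW.
    rewrite /Pp !hornerE ps0 mulr0 sub0r oppr_ge0 => hle.
    by have := pCpos s0 ts0; rewrite ltNge hle.
  - move=> c0 _ _ hno; have := hno s1.
    rewrite in_itv /= s1B andbT /root r1 eqxx /= => h.
    have : t - 1 < s1 by rewrite ltrBlDr (le_lt_trans ts1) // ltrDl ltr01.
    by move/h.
have mQ := IH D t hD HD.
have uQ := mono_unit mQ.
have hR := mono_inv mQ.
have pDt := monic_pos (char_poly_monic D) HD (lexx t).
have pCt := pCpos t (lexx t).
rewrite (F1 uQ) -/a -/b -/c -/D in pCt.
set Q := t%:M - D in mQ uQ hR pCt *.
set Rm := invmx Q in hR pCt *.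
set sg := (t - a 0 0 - _) in pCt.
have hsg : 0 < sg by rewrite pmulr_rgt0 in pCt.
move=> x hx.
rewrite sIC_block -/a -/b -/c -/D -/Q -[x]hsubmxK mul_row_block in hx.
set x0 := lsubmx x in hx *; set y := rsubmx x in hx *.
have hu : nonneg_mx (x0 *m (t%:M - a) + y *m - c).
  by move=> i j; have := hx i (lshift n j); rewrite row_mxEl.
have hv : nonneg_mx (x0 *m - b + y *m Q).
  by move=> i j; have := hx i (rshift 1 j); rewrite row_mxEr.
set y' := y - x0 *m b *m Rm.
have hy' : nonneg_mx y'.
  apply: mQ; rewrite /y' mulmxBl mulmxKV //.
  by rewrite mulmxN addrC in hv.
have eu : x0 *m (t%:M - a) + y *m - c = x0 *m ((t%:M - a) - b *m Rm *m c) - y' *m c.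
  by rewrite /y' mulmxBl opprB [x0 *m (_ - b *m _ *m _)]mulmxBr !mulmxA addrA subrK mulmxN.
have e0 : x0 = (x0 0 0)%:M := mx11_scalar x0.
have hxi : 0 <= x0 0 0.
  have hsub : forall (A B : 'M[R]_1), (A - B) 0 0 = A 0 0 - B 0 0.
    by move=> A B; rewrite !mxE.
  have := hu 0 0; rewrite eu hsub {1}e0 mul_scalar_mx.
  rewrite [((_ : R) *: (_ : 'M[R]_1)) 0 0]mxE.
  have -> : (t%:M - a - b *m Rm *m c) 0 0 = sg by rewrite /sg !mxE eqxx mulr1n.
  have hk : 0 <= (y' *m c) 0 0 by apply: nn_mul.
  move=> h; rewrite -(pmulr_lge0 _ hsg).
  by rewrite (le_trans h) // gerBl.
have hx0 : nonneg_mx x0 by move=> i j; rewrite !ord1.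
have hy : nonneg_mx y.
  have -> : y = y' + x0 *m b *m Rm by rewrite /y' subrK.
  by apply: nn_add => //; apply: nn_mul => //; apply: nn_mul.
move=> i j; rewrite -[x]hsubmxK mxE; case: splitP => k _; [exact: hx0 | exact: hy].
Qed.

Lemma L2 (R : rcfType) n (C : 'M[R]_n) t : nonneg_mx C ->
  (forall s, t <= s -> (char_poly C).[s] != 0) -> mono (t%:M - C).
Proof.
elim: n C t => [|n IH] C t.
  by move=> _ _ x _ i [].
exact: L2_step.
Qed.

Lemma normcE (R : rcfType) (z : R[i]) : ((Normc.normc z)%:C)%C = `|z|.
Proof. by case: z => a b; rewrite normc_def. Qed.

Lemma normc_ge0 (R : rcfType) (z : R[i]) : 0 <= Normc.normc z.
Proof. by rewrite -(@ler0c R) normcE. Qed.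

Definition wv (R : rcfType) n (z : 'rV[R[i]]_n) : 'rV[R]_n :=
  \row_j Normc.normc (z 0 j).

Lemma wv_nn (R : rcfType) n (z : 'rV[R[i]]_n) : nonneg_mx (wv z).
Proof. by move=> i j; rewrite mxE normc_ge0. Qed.

Lemma wv_eq0 (R : rcfType) n (z : 'rV[R[i]]_n) : wv z = 0 -> z = 0.
Proof.
move=> h; apply/matrixP => i j; rewrite !ord1 mxE.
by apply: Normc.eq0_normc; have := congr1 (fun M : 'rV[R]_n => M 0 j) h; rewrite !mxE.
Qed.

Lemma eig_abs (R : rcfType) n (B : 'M[R]_n) (mu : R[i]) (z : 'rV[R[i]]_n) :
  nonneg_mx B -> z *m cplx_mx B = mu *: z ->
  le_mx (Normc.normc mu *: wv z) (wv z *m B).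
Proof.
move=> hB hz i j; rewrite !ord1 !mxE -(@lecR R) rmorphM rmorph_sum /= !normcE.
rewrite -normrM.
have -> : mu * z 0 j = (z *m cplx_mx B) 0 j by rewrite hz mxE.
rewrite mxE (le_trans (ler_norm_sum _ _ _)) //; apply: ler_sum => k _.
rewrite rmorphM /= !mxE normcE normrM [X in _ * X <= _]ger0_norm // ler0c; exact: hB.
Qed.

Lemma spectrumP (R : rcfType) n (A : 'M[R]_n) z :
  (z \in spectrum A) = root (char_poly (cplx_mx A)) z.
Proof.
rewrite /spectrum; case: closed_field_poly_normal => r /= hr.
rewrite [in RHS]hr rootZ ?root_prod_XsubC // lead_coef_eq0.
exact: (monic_neq0 (char_poly_monic (cplx_mx A))).
Qed.
Lemma spectrum_eig (R : rcfType) n (A : 'M[R]_n) z :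
  z \in spectrum A -> exists2 v : 'rV[R[i]]_n, v *m cplx_mx A = z *: v & v != 0.
Proof. by rewrite spectrumP -eigenvalue_root_char => /eigenvalueP. Qed.

Lemma spectrum_real (R : rcfType) n (A : 'M[R]_n) s :
  (char_poly A).[s] = 0 -> ((s%:C)%C \in spectrum A).
Proof.
move=> h; rewrite spectrumP /cplx_mx -(map_char_poly (real_complex R)) /root.
by rewrite horner_map h rmorph0.
Qed.

Lemma rho_ge0 (R : rcfType) n (A : 'M[R]_n) : 0 <= spectral_radius A.
Proof.
rewrite /spectral_radius; elim: (spectrum A) => [|x s IH]; rewrite ?big_nil ?big_cons //.
by rewrite le_max IH orbT.
Qed.

Lemma rho_ge (R : rcfType) n (A : 'M[R]_n) z :
  z \in spectrum A -> Normc.normc z <= spectral_radius A.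
Proof.
rewrite /spectral_radius; elim: (spectrum A) => [|x s IH]; rewrite ?big_nil ?big_cons //.
rewrite inE le_max => /orP [/eqP ->|/IH ->]; by rewrite ?lexx ?orbT.
Qed.

Lemma rho_le (R : rcfType) n (A : 'M[R]_n) c :
  0 <= c -> (forall z, z \in spectrum A -> Normc.normc z <= c) ->
  spectral_radius A <= c.
Proof.
rewrite /spectral_radius => c0; elim: (spectrum A) => [|x s IH] h; rewrite ?big_nil ?big_cons //.
rewrite ge_max h ?mem_head //= IH // => z zs; apply: h; by rewrite inE zs orbT.
Qed.

Lemma rho_lt (R : rcfType) n (A : 'M[R]_n) c :
  0 < c -> (forall z, z \in spectrum A -> Normc.normc z < c) ->
  spectral_radius A < c.
Proof.
rewrite /spectral_radius => c0; elim: (spectrum A) => [|x s IH] h; rewrite ?big_nil ?big_cons //.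
rewrite gt_max h ?mem_head //= IH // => z zs; apply: h; by rewrite inE zs orbT.
Qed.


Lemma mxE_sub (R : zmodType) m n (A B : 'M[R]_(m,n)) i j :
  (A - B) i j = A i j - B i j.
Proof. by rewrite !mxE. Qed.

Lemma mxE_opp (R : zmodType) m n (A : 'M[R]_(m,n)) i j :
  (- A) i j = - A i j.
Proof. by rewrite !mxE. Qed.

Lemma mxE_scale (R : pzRingType) m n a (A : 'M[R]_(m,n)) i j :
  (a *: A) i j = a * A i j.
Proof. by rewrite !mxE. Qed.

Lemma L1 (R : rcfType) n (B C : 'M[R]_n) t mu (z : 'rV[R[i]]_n) :
  nonneg_mx B -> nonneg_mx (C - B) -> mono (t%:M - C) ->
  z *m cplx_mx B = mu *: z -> z != 0 -> Normc.normc mu < t.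
Proof.
move=> hB hCB hm hz zn0; rewrite ltNge; apply/negP => tle.
set w := wv z.
have hw := eig_abs hB hz.
have hwn := wv_nn z.
have h1 : nonneg_mx (- w *m (t%:M - C)).
  move=> i j; rewrite mulNmx mulmxBr opprB mul_mx_scalar mxE_sub mxE_scale subr_ge0.
  have := nn_mul hwn hCB i j; rewrite mulmxBr mxE_sub subr_ge0 => h2.
  apply: le_trans h2; apply: le_trans (hw i j); rewrite mxE_scale.
  by rewrite -/w ler_wpM2r // hwn.
have h2 := hm _ h1.
apply/negP: zn0; rewrite negbK; apply/eqP/wv_eq0; apply/matrixP => i j.
have := h2 i j; rewrite !mxE oppr_ge0 => h; apply/eqP; rewrite eq_le h.
by have := hwn i j; rewrite mxE.
Qed.

Lemma iterE (R : numFieldType) n p (A : 'M[R]_n) (U V E : 'I_p -> 'M[R]_n) :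
  (forall k, weak_regular_splitting A (U k) (V k)) -> \sum_(k < p) E k = 1%:M ->
  multisplitting_iter U V E = 1%:M - (\sum_(k < p) E k *m invmx (U k)) *m A.
Proof.
move=> h hE; rewrite /multisplitting_iter.
rewrite (eq_bigr (fun k => E k - E k *m invmx (U k) *m A)).
  by rewrite sumrB hE mulmx_suml.
move=> k _; case: (h k) => eA uU _ _.
have -> : V k = U k - A by rewrite eA opprB addrC subrK.
by rewrite mulmxBr mulVmx // mulmxBr mulmx1 mulmxA.
Qed.

Unset Implicit Arguments.

Theorem corollary5p12 (R : rcfType) (n p : nat) (A : 'M[R]_n)
  (U1 V1 U2 V2 E : 'I_p -> 'M[R]_n) :
  A \in unitmx -> nonneg_mx A -> nonneg_mx (invmx A) ->
  weak_regular_multisplitting A U1 V1 E ->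
  weak_regular_multisplitting A U2 V2 E ->
  (forall k, le_mx (V1 k) (V2 k)) ->
  spectral_radius (multisplitting_iter U1 V1 E)
    <= spectral_radius (multisplitting_iter U2 V2 E) /\
  spectral_radius (multisplitting_iter U2 V2 E) < 1.
Proof.
move=> uA hA hAi [h1 hE hsum] [h2 _ _] hV.
have hEn : forall k, nonneg_mx (E k) by move=> k; case: (hE k).
set H1 := multisplitting_iter U1 V1 E.
set H2 := multisplitting_iter U2 V2 E.
set M1 := \sum_(k < p) E k *m invmx (U1 k).
set M2 := \sum_(k < p) E k *m invmx (U2 k).
have eH1 : H1 = 1%:M - M1 *m A by rewrite /H1 (iterE h1 hsum).
have eH2 : H2 = 1%:M - M2 *m A by rewrite /H2 (iterE h2 hsum).
have hH1 : nonneg_mx H1.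
  apply: nn_sum => k; apply: nn_mul => //; by case: (h1 k).
have hM2 : nonneg_mx M2.
  apply: nn_sum => k; apply: nn_mul => //; by case: (h2 k).
have hH21 : nonneg_mx (H2 - H1).
  rewrite eH1 eH2 opprB addrC addrA subrK -mulmxBl.
  apply: nn_mul => //; rewrite /M1 /M2 -sumrB; apply: nn_sum => k.
  rewrite -mulmxBr; apply: nn_mul => //.
  case: (h1 k) => eA1 u1 _ _; case: (h2 k) => eA2 u2 _ _.
  have -> : invmx (U1 k) - invmx (U2 k) =
      invmx (U1 k) *m (V2 k - V1 k) *m invmx (U2 k).
    have -> : V2 k - V1 k = U2 k - U1 k.
      have eU1 : U1 k = A + V1 k by rewrite eA1 subrK.
      have eU2 : U2 k = A + V2 k by rewrite eA2 subrK.
      by rewrite eU1 eU2 opprD addrACA subrr add0r.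
    by rewrite mulmxBr mulmxBl mulmxK // mulVmx // mul1mx.
  apply: nn_mul; [apply: nn_mul|].
  - by case: (h1 k).
  - by move=> i j; rewrite mxE_sub subr_ge0; apply: hV.
  - by case: (h2 k).
split.
  apply: rho_le; first exact: rho_ge0.
  move=> mu /spectrum_eig [z hz zn0].
  rewrite leNgt; apply/negP => hlt.
  set t := Normc.normc mu in hlt.
  have hm : mono (t%:M - H2).
    apply: L2 => [|s ts]; first by move=> i j; rewrite -[H2](subrK H1); apply: nn_add.
    apply/negP => /eqP /spectrum_real /rho_ge.
    have -> : Normc.normc ((s%:C)%C) = s.
      apply: (@complexI R); rewrite normcE ger0_norm // ler0c.
      by apply: le_trans ts; exact: normc_ge0.
    by move=> hs; have := lt_le_trans (le_lt_trans hs hlt) ts; rewrite ltxx.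
  by have := L1 hH1 hH21 hm hz zn0; rewrite ltxx.
apply: rho_lt; first exact: ltr01.
move=> mu /spectrum_eig [z hz zn0].
rewrite ltNge; apply/negP => hge.
have hH2 : nonneg_mx H2 by rewrite -[H2](subrK H1); apply: nn_add.
set w := wv z.
have hwn := wv_nn z.
have hw := eig_abs hH2 hz.
set y := w *m M2.
have hyA : nonneg_mx (- (y *m A)).
  move=> i j; have := hw i j; have := hwn i j.
  rewrite -/w eH2 mulmxBr mulmx1 mxE_sub mxE_scale mulmxA mxE_opp -/y.
  move=> h0 h; nra.
have hy0 : nonneg_mx (- y).
  have -> : - y = (- (y *m A)) *m invmx A by rewrite mulNmx mulmxK.
  exact: nn_mul.
have hy : nonneg_mx y by apply: nn_mul.
have y0 : y = 0.
  apply/matrixP => i j; have := hy i j; have := hy0 i j.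
  rewrite mxE_opp oppr_ge0 => a b.
  have -> : (0 : 'rV[R]_n) i j = 0 by rewrite mxE.
  by apply/eqP; rewrite eq_le a b.
have hT : forall k, nonneg_mx (w *m (E k *m invmx (U2 k))).
  by move=> k; apply: nn_mul => //; apply: nn_mul => //; case: (h2 k).
have T0 : forall k, w *m (E k *m invmx (U2 k)) = 0.
  move=> k; apply/matrixP => i j.
  have := congr1 (fun M : 'rV[R]_n => M i j) y0.
  rewrite /y /M2 mulmx_sumr summxE mxE => hs.
  by rewrite (psumr_eq0P (fun k _ => hT k i j) hs) // mxE.
have wE0 : forall k, w *m E k = 0.
  move=> k; case: (h2 k) => _ u2 _ _.
  by rewrite -(mulmxKV u2 (w *m E k)) -[w *m E k *m invmx (U2 k)]mulmxA T0 mul0mx.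
have w0 : w = 0.
  by rewrite -[w]mulmx1 -hsum mulmx_sumr big1.
by apply: (negP zn0); apply/eqP/wv_eq0.
Qed.
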